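(* Let $\mathcal{C}_1$ and $\mathcal{C}_2$ be two maximal commuting classes of two-qubit Pauli operators ($d=4$) that belong to a complete set of maximal commuting classes. Then there do not exist two further maximal commuting Pauli classes $\mathcal{C}_3'$ and $\mathcal{C}_4'$ (with $\mathcal{C}_1,\mathcal{C}_2,\mathcal{C}_3',\mathcal{C}_4'$ pairwise disjoint) such that the common eigenbases of $\mathcal{C}_1,\mathcal{C}_2,\mathcal{C}_3',\mathcal{C}_4'$ form a weakly unextendible set of four mutually unbiased bases in $\mathbb{C}^4$.
   Context: Two-qubit Pauli operators are the tensor products $P_1\otimes P_2$ with $P_k\in\{I,X,Y,Z\}$. A maximal commuting class in $d=4$ is a set of $3$ mutually commuting non-identity two-qubit Pauli operators. A complete set of classes is a family of $5$ pairwise disjoint maximal commuting classes whose union is the set of all $15$ non-identity two-qubit Pauli operators. Two orthonormal bases of $\mathbb{C}^d$ are mutually unbiased if $|\langle a|b\rangle|=1/\sqrt d$ for all vectors $a$ of the first and $b$ of the second; common eigenbases of pairwise disjoint maximal commuting Pauli classes are mutually unbiased. A set of mutually unbiased bases obtained as common eigenbases of Pauli classes is weakly unextendible if there is no further basis, unbiased to all of them, that is the common eigenbasis of a maximal commuting class of Pauli operators. *)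

(* Defs.v *)
From mathcomp Require Import all_boot all_order all_algebra all_field.
Set Implicit Arguments. Unset Strict Implicit. Unset Printing Implicit Defensive.
Import Order.TTheory GRing.Theory Num.Theory.
Local Open Scope ring_scope.

(* single-qubit Paulis, indexed 0 = I, 1 = X, 2 = Y, 3 = Z *)
Definition pauli1 (k : 'I_4) : 'M[algC]_2 :=
  \matrix_(i < 2, j < 2)
    match val k with
    | 0 => if i == j then 1 else 0
    | 1 => if i == j then 0 else 1
    | 2 => if i == j then 0 else (if val i == 0%N then - 'i else 'i)
    | _ => if i == j then (if val i == 0%N then 1 else -1) else 0
    end.

Definition kron2 (A B : 'M[algC]_2) : 'M[algC]_4 :=
  \matrix_(r < 4, c < 4)
    (A (inord (r %/ 2)) (inord (c %/ 2)) * B (inord (r %% 2)) (inord (c %% 2))).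

Definition pauli := ('I_4 * 'I_4)%type.
Definition pmx (p : pauli) : 'M[algC]_4 := kron2 (pauli1 p.1) (pauli1 p.2).
Definition nonid (p : pauli) : bool := p != (ord0, ord0).

Definition maxclass (C : {set pauli}) : Prop :=
  #|C| = 3%N /\ (forall p, p \in C -> nonid p) /\
  (forall p q, p \in C -> q \in C -> pmx p *m pmx q = pmx q *m pmx p).

Definition complete_set (S : {set {set pauli}}) : Prop :=
  #|S| = 5%N /\ (forall C, C \in S -> maxclass C) /\ trivIset S /\
  cover S = [set p | nonid p].

Definition dotv (u v : 'cV[algC]_4) : algC := \sum_(k < 4) (u k 0)^* * v k 0.
Definition onb (B : 'M[algC]_4) : Prop :=
  forall i j : 'I_4, dotv (col i B) (col j B) = (i == j)%:R.

Definition unbiased (B B' : 'M[algC]_4) : Prop :=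
  forall i j : 'I_4, `|dotv (col i B) (col j B')| = (sqrtC 4%:R)^-1.

Definition eigbasis (C : {set pauli}) (B : 'M[algC]_4) : Prop :=
  onb B /\ forall p, p \in C -> forall j : 'I_4,
    exists lam : algC, pmx p *m col j B = lam *: col j B.

Definition mub_set (Bs : seq 'M[algC]_4) : Prop :=
  (forall B, B \in Bs -> onb B) /\
  forall i j, (i < size Bs)%N -> (j < size Bs)%N -> i != j ->
    unbiased (nth 0 Bs i) (nth 0 Bs j).

Definition weakly_unextendible (Bs : seq 'M[algC]_4) : Prop :=
  mub_set Bs /\
  ~ (exists (C : {set pauli}) (B : 'M[algC]_4),
        maxclass C /\ eigbasis C B /\ forall B0, B0 \in Bs -> unbiased B0 B).

(* Main.v *)
Require Import Defs.
From mathcomp Require Import all_boot all_order all_algebra all_field.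
From mathcomp Require Import ring.
Set Implicit Arguments. Unset Strict Implicit. Unset Printing Implicit Defensive.
Import Order.TTheory GRing.Theory Num.Theory.
Local Open Scope ring_scope.

Definition xr (a b : nat) : nat :=
  match a, b with
  | 0, x => x | x, 0 => x
  | 1, 2 => 3 | 1, 3 => 2 | 2, 1 => 3 | 2, 3 => 1 | 3, 1 => 2 | 3, 2 => 1
  | _, _ => 0 end.
Definition o0 : 'I_4 := @Ordinal 4 0 isT.
Definition o1 : 'I_4 := @Ordinal 4 1 isT.
Definition o2 : 'I_4 := @Ordinal 4 2 isT.
Definition o3 : 'I_4 := @Ordinal 4 3 isT.
Definition x4 (a b : 'I_4) : 'I_4 := nth o0 [:: o0; o1; o2; o3] (xr a b).
Lemma val_x4 a b : val (x4 a b) = xr a b.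
Proof. rewrite /x4; case: a => [[|[|[|[|a]]]] Ha]; case: b => [[|[|[|[|b]]]] Hb] //. Qed.

Definition c1 (a b : 'I_4) : algC :=
  match val a, val b with
  | 1, 2 => 'i | 2, 3 => 'i | 3, 1 => 'i
  | 2, 1 => - 'i | 3, 2 => - 'i | 1, 3 => - 'i
  | _, _ => 1 end.

Definition ac1 (a b : 'I_4) : bool := (val a != 0%N) && (val b != 0%N) && (val a != val b).
Definition sg (b : bool) : algC := if b then -1 else 1.

Ltac cas4 a := case: a => [[|[|[|[|?]]]] ?] //.

Lemma p1_mul a b : pauli1 a *m pauli1 b = c1 a b *: pauli1 (x4 a b).
Proof.
apply/matrixP => i j; rewrite !mxE !big_ord_recr !big_ord0 /= !mxE val_x4.
cas4 a; cas4 b; case: i => [[|[|?]] ?] //; case: j => [[|[|?]] ?] //=;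
  rewrite /c1 /=; try ring; rewrite ?mulrN ?mulNr ?opprK -?expr2 ?sqrCi; ring.
Qed.

Lemma p1_comm a b : pauli1 a *m pauli1 b = sg (ac1 a b) *: (pauli1 b *m pauli1 a).
Proof.
apply/matrixP => i j; rewrite !mxE !big_ord_recr !big_ord0 /= !mxE.
cas4 a; cas4 b; case: i => [[|[|?]] ?] //; case: j => [[|[|?]] ?] //=;
  rewrite /sg /ac1 /=; try ring.
all: rewrite ?mulrN ?mulNr ?opprK -?expr2 ?sqrCi; try ring.
Qed.

Lemma p1_sq a : pauli1 a *m pauli1 a = 1%:M.
Proof.
apply/matrixP => i j; rewrite !mxE !big_ord_recr !big_ord0 /= !mxE.
cas4 a; case: i => [[|[|?]] ?] //; case: j => [[|[|?]] ?] //=;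
  rewrite ?mulrN ?mulNr ?opprK -?expr2 ?sqrCi; try ring.
Qed.

Definition herm (A : 'M[algC]_4) := forall i j, A j i = (A i j)^*.

Lemma p1_herm a i j : pauli1 a j i = (pauli1 a i j)^*.
Proof.
rewrite !mxE.
cas4 a; case: i => [[|[|?]] ?] //; case: j => [[|[|?]] ?] //=;
  rewrite ?rmorph0 ?rmorph1 ?rmorphN ?conjCi ?opprK //.
- by rewrite -[RHS]/(- ('i^*)) ?conjCi ?opprK.
- by rewrite -[RHS]/(- (1^*)) conjC1.
Qed.

Lemma p1_0 : pauli1 o0 = 1%:M.
Proof. by apply/matrixP => i j; rewrite !mxE /=; case: (i == j). Qed.

Definition hh (r : 'I_4) : 'I_2 := inord (r %/ 2).
Definition ll (r : 'I_4) : 'I_2 := inord (r %% 2).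
Definition gg (r : 'I_4) : 'I_2 * 'I_2 := (hh r, ll r).
Definition ff (p : 'I_2 * 'I_2) : 'I_4 := inord (p.1 * 2 + p.2).

Lemma gg_bij : bijective gg.
Proof.
exists ff.
- move=> r; apply/val_inj; rewrite /ff /gg /hh /ll /=.
  case: r => [[|[|[|[|r]]]] Hr] //=; by rewrite !inordK.
- case=> i j; rewrite /ff /gg /hh /ll /=.
  case: i => [[|[|i]] Hi] //; case: j => [[|[|j]] Hj] //;
  by congr pair; apply/val_inj; rewrite /= !inordK.
Qed.

Lemma kronE (A B : 'M[algC]_2) r c : kron2 A B r c = A (hh r) (hh c) * B (ll r) (ll c).
Proof. by rewrite mxE. Qed.

Lemma kron_mul (A B C D : 'M[algC]_2) :
  kron2 A B *m kron2 C D = kron2 (A *m C) (B *m D).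
Proof.
apply/matrixP => r c; rewrite kronE !mxE big_distrlr /= pair_big /=.
rewrite (reindex gg); last by apply: onW_bij; exact: gg_bij.
apply: eq_bigr => k _; rewrite !kronE /=; ring.
Qed.

Lemma kron_scale (a b : algC) (A B : 'M[algC]_2) :
  kron2 (a *: A) (b *: B) = (a * b) *: kron2 A B.
Proof. apply/matrixP => r c; rewrite !mxE; ring. Qed.

Lemma kron_1 : kron2 1%:M 1%:M = 1%:M.
Proof.
apply/matrixP => r c; rewrite kronE !mxE -natrM mulnb.
have := bij_inj gg_bij; move/inj_eq => <-. by [].
Qed.

Lemma kron_herm (A B : 'M[algC]_2) :
  (forall i j, A j i = (A i j)^*) -> (forall i j, B j i = (B i j)^*) -> herm (kron2 A B).
Proof. by move=> hA hB i j; rewrite !kronE hA hB rmorphM. Qed.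

Definition comm (p q : pauli) : bool := ac1 p.1 q.1 == ac1 p.2 q.2.
Definition ppx (p q : pauli) : pauli := (x4 p.1 q.1, x4 p.2 q.2).
Definition p0 : pauli := (o0, o0).

Lemma sgM a b : sg a * sg b = sg (a != b).
Proof. by case: a; case: b; rewrite /sg /=; ring. Qed.
Lemma sg_sq a : sg a * sg a = 1.
Proof. by rewrite sgM eqxx. Qed.
Lemma sg_conj a : (sg a)^* = sg a.
Proof. by case: a; rewrite /sg ?rmorphN rmorph1. Qed.
Lemma sg_neq0 a : sg a != 0.
Proof. by case: a; rewrite /sg ?oppr_eq0 oner_eq0. Qed.

Lemma pmx_sq p : pmx p *m pmx p = 1%:M.
Proof. by rewrite /pmx kron_mul !p1_sq kron_1. Qed.

Lemma pmx_herm p : herm (pmx p).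
Proof. by apply: kron_herm => i j; apply: p1_herm. Qed.

Lemma pmx_comm p q : pmx p *m pmx q = sg (~~ comm p q) *: (pmx q *m pmx p).
Proof. by rewrite /pmx !kron_mul p1_comm (p1_comm p.2) kron_scale sgM. Qed.

Lemma c1_neq0 a b : c1 a b != 0.
Proof.
rewrite /c1; cas4 a; cas4 b; rewrite /= ?oppr_eq0 ?neq0Ci ?oner_eq0 //.
Qed.

Lemma pmx_mul p q : pmx p *m pmx q = (c1 p.1 q.1 * c1 p.2 q.2) *: pmx (ppx p q).
Proof. by rewrite /pmx kron_mul !p1_mul kron_scale. Qed.

Lemma pmx0 : pmx p0 = 1%:M.
Proof. by rewrite /pmx /= p1_0 kron_1. Qed.

Definition cv := 'cV[algC]_4.

Lemma dotvDl (u w v : cv) : dotv (u + w) v = dotv u v + dotv w v.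
Proof. rewrite /dotv -big_split /=; apply: eq_bigr => k _; rewrite !mxE rmorphD; ring. Qed.
Lemma dotvDr (u w v : cv) : dotv v (u + w) = dotv v u + dotv v w.
Proof. rewrite /dotv -big_split /=; apply: eq_bigr => k _; rewrite !mxE; ring. Qed.
Lemma dotvZl a (u v : cv) : dotv (a *: u) v = a^* * dotv u v.
Proof. rewrite /dotv mulr_sumr; apply: eq_bigr => k _; rewrite !mxE rmorphM; ring. Qed.
Lemma dotvZr a (u v : cv) : dotv u (a *: v) = a * dotv u v.
Proof. rewrite /dotv mulr_sumr; apply: eq_bigr => k _; rewrite !mxE; ring. Qed.
Lemma dotv_conj (u v : cv) : dotv v u = (dotv u v)^*.
Proof. rewrite /dotv rmorph_sum; apply: eq_bigr => k _; by rewrite rmorphM /= conjCK mulrC. Qed.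
Lemma dotv_herm M (u v : cv) : herm M -> dotv (M *m u) v = dotv u (M *m v).
Proof.
move=> hM; rewrite /dotv.
under eq_bigr => k _ do rewrite mxE rmorph_sum mulr_suml.
under [RHS]eq_bigr => k _ do rewrite mxE mulr_sumr.
rewrite exchange_big /=; apply: eq_bigr => i _; apply: eq_bigr => j _.
rewrite rmorphM /= -hM; ring.
Qed.

Definition ct m n (A : 'M[algC]_(m, n)) : 'M[algC]_(n, m) := (map_mx (fun x : algC => x^*) A)^T.

Lemma dotvE (u v : cv) : dotv u v = (ct u *m v) 0 0.
Proof. by rewrite /dotv mxE; apply: eq_bigr => k _; rewrite !mxE. Qed.

Lemma eig_sq M (b : cv) mu : M *m M = 1%:M -> dotv b b = 1 -> M *m b = mu *: b -> mu * mu = 1.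
Proof.
move=> hMM hb hMb.
have e : b = (mu * mu) *: b.
  by rewrite -scalerA -hMb scalemxAr -hMb mulmxA hMM mul1mx.
by have := dotvZr (mu * mu) b b; rewrite -e hb mulr1 => <-.
Qed.

Lemma eig_real M (b : cv) mu : herm M -> dotv b b = 1 -> M *m b = mu *: b -> mu^* = mu.
Proof.
move=> hM hb hMb; have := dotv_herm b b hM.
by rewrite hMb dotvZl dotvZr hb !mulr1.
Qed.

Lemma eig_norm M (b : cv) mu : herm M -> M *m M = 1%:M -> dotv b b = 1 ->
  M *m b = mu *: b -> `|mu| = 1.
Proof.
move=> hM hMM hb hMb.
apply/eqP; rewrite -(@eqrXn2 _ 2) // ?normr_ge0 // normCK (eig_real hM hb hMb).
by rewrite (eig_sq hMM hb hMb) expr1n.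
Qed.

Lemma orth_anti S K (a : cv) s : herm S -> S *m S = 1%:M -> dotv a a = 1 ->
  S *m a = s *: a -> S *m K = - (K *m S) -> dotv a (K *m a) = 0.
Proof.
move=> hS hSS ha hSa hSK.
have hs := eig_real hS ha hSa.
have s2 := eig_sq hSS ha hSa.
have e1 : dotv (S *m a) (K *m a) = s * dotv a (K *m a) by rewrite hSa dotvZl hs.
rewrite dotv_herm // mulmxA hSK mulNmx -mulmxA hSa -scalemxAr -scaleNr dotvZr in e1.
have : (s * dotv a (K *m a)) *+ 2 = 0.
  by rewrite mulr2n -{1}e1; ring.
move/eqP; rewrite mulrn_eq0 /= mulf_eq0 => /orP [/eqP s0|/eqP //].
by move: s2; rewrite s0 mul0r => /eqP; rewrite eq_sym oner_eq0.
Qed.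

Lemma orth_eig M (v w : cv) l m : herm M -> M *m v = l *: v -> M *m w = m *: w ->
  l^* = l -> l != m -> dotv v w = 0.
Proof.
move=> hM hv hw hl lm.
have := dotv_herm v w hM; rewrite hv hw dotvZl dotvZr hl => /eqP.
rewrite -subr_eq0 -mulrBl mulf_eq0 subr_eq0 (negbTE lm) /=; by move/eqP.
Qed.

Lemma unb (a b : cv) (M : 'I_4 -> 'M[algC]_4) :
  dotv a a = 1 -> dotv b b = 1 ->
  (forall j, herm (M j)) -> (forall j, M j *m M j = 1%:M) ->
  (forall j, exists mu, M j *m b = mu *: b) ->
  (forall j k, j != k -> dotv a ((M j *m M k) *m a) = 0) ->
  `|dotv a b| = 2^-1.
Proof.
move=> ha hb hM hMM hMb hort.
pose X : 'M[algC]_4 := \matrix_(i, j) (M j *m a) i 0.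
have colX j : col j X = M j *m a by apply/matrixP => i k; rewrite !mxE (ord1 k).
have hX : ct X *m X = 1%:M.
  apply/matrixP => i j.
  have -> : (ct X *m X) i j = dotv (col i X) (col j X).
    by rewrite /dotv mxE; apply: eq_bigr => k _; rewrite !mxE.
  rewrite !colX dotv_herm // mulmxA !mxE.
  case: (eqVneq i j) => [<-|ij]; first by rewrite hMM mul1mx ha.
  by rewrite hort.
have hX' := mulmx1C hX.
have e1 : 1 = ((ct b *m X) *m (ct X *m b)) 0 0.
  by rewrite mulmxA -(mulmxA (ct b)) hX' mulmx1 -dotvE hb.
have dj j : (ct X *m b) j 0 = dotv (col j X) b.
  by rewrite /dotv mxE; apply: eq_bigr => k _; rewrite !mxE.
have dj' j : (ct b *m X) 0 j = (dotv (col j X) b)^*.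
  by rewrite -dotv_conj /dotv mxE; apply: eq_bigr => k _; rewrite !mxE.
have term j : (ct b *m X) 0 j * (ct X *m b) j 0 = `|dotv a b| ^+ 2.
  rewrite dj dj' -normCKC colX dotv_herm //.
  have [mu hmu] := hMb j.
  by rewrite hmu dotvZr normrM (eig_norm (hM j) (hMM j) hb hmu) mul1r.
move: e1; rewrite mxE (eq_bigr _ (fun j _ => term j)) sumr_const card_ord => e1.
apply/eqP; rewrite -(@eqrXn2 _ 2) // ?normr_ge0 ?invr_ge0 ?ler0n //.
apply/eqP; apply: (@mulfI _ (4%:R)); first by rewrite pnatr_eq0.
rewrite -mulr_natl in e1; rewrite -e1 exprVn expr2 -natrM mulfV // pnatr_eq0. all: by [].
Qed.



Definition on (a : nat) : 'I_4 := nth o0 [:: o0; o1; o2; o3] a.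
Definition pt (a b : nat) : pauli := (on a, on b).
Definition allo : seq 'I_4 := [:: o0; o1; o2; o3].
Definition tri := (pauli * pauli * pauli)%type.
Definition lines : seq tri :=
 [:: (pt 0 1, pt 1 0, pt 1 1);
  (pt 0 1, pt 2 0, pt 2 1);
  (pt 0 1, pt 3 0, pt 3 1);
  (pt 0 2, pt 1 0, pt 1 2);
  (pt 0 2, pt 2 0, pt 2 2);
  (pt 0 2, pt 3 0, pt 3 2);
  (pt 0 3, pt 1 0, pt 1 3);
  (pt 0 3, pt 2 0, pt 2 3);
  (pt 0 3, pt 3 0, pt 3 3);
  (pt 1 1, pt 2 2, pt 3 3);
  (pt 1 1, pt 2 3, pt 3 2);
  (pt 1 2, pt 2 1, pt 3 3);
  (pt 1 2, pt 2 3, pt 3 1);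
  (pt 1 3, pt 2 1, pt 3 2);
  (pt 1 3, pt 2 2, pt 3 1)].
Definition elems (t : tri) : seq pauli := [:: t.1.1; t.1.2; t.2].
Definition allp : seq pauli := [seq (a, b) | a <- allo, b <- allo].
Definition dj (t t' : tri) := ~~ has (fun x => x \in elems t') (elems t).
Definition same (t u : tri) :=
  all (fun x => x \in elems u) (elems t) && all (fun x => x \in elems t) (elems u).
Definition eD (t : tri) (j : 'I_4) : pauli := nth p0 [:: p0; t.1.1; t.1.2; t.2] j.

Definition ch_line := all (fun t => [&& uniq (elems t), all nonid (elems t),
   comm t.1.1 t.1.2, comm t.1.1 t.2, comm t.1.2 t.2 & t.2 == ppx t.1.1 t.1.2]) lines.
Lemma ch_line_ok : ch_line. Proof. by vm_compute. Qed.

Definition ch_cls := all (fun x => all (fun y => all (fun z =>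
  if [&& uniq [:: x; y; z], all nonid [:: x; y; z], comm x y, comm x z & comm y z] then
   has (fun t => same t (x, y, z)) lines else true) allp) allp) allp.
Lemma ch_cls_ok : ch_cls. Proof. by vm_compute. Qed.

Definition ch_f1 := all (fun t => all (fun t' => dj t t' ==>
  all (fun j => all (fun k => (j != k) ==>
     has (fun s => comm s (eD t' j) != comm s (eD t' k)) (elems t)) (allo)) (allo))
  lines) lines.
Lemma ch_f1_ok : ch_f1. Proof. by vm_compute. Qed.

Definition ch_f2 := all (fun t1 => all (fun t2 => if dj t1 t2 then
  all (fun t3 => if dj t1 t3 && dj t2 t3 then all (fun t4 => if [&& dj t1 t4, dj t2 t4 & dj t3 t4] then
    has (fun t5 => [&& dj t1 t5, dj t2 t5, dj t3 t5 & dj t4 t5]) lines else true) lines else true) lines else true) lines) lines.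
Lemma ch_f2_ok : ch_f2. Proof. by vm_compute. Qed.



Definition setof (t : tri) : {set pauli} := [set x in elems t].

Lemma in_setof t x : (x \in setof t) = (x \in elems t).
Proof. by rewrite inE. Qed.

Lemma allo_all a : a \in allo.
Proof. by cas4 a. Qed.
Lemma allp_all p : p \in allp.
Proof. case: p => a b; apply: (allpairs_f pair); exact: allo_all. Qed.

Lemma comm_sym p q : comm p q = comm q p.
Proof.
case: p => a1 a2; case: q => b1 b2; rewrite /comm /ac1 /=.
by cas4 a1; cas4 b1; cas4 a2; cas4 b2.
Qed.
Lemma comm_refl p : comm p p.
Proof. by rewrite /comm /ac1 !eqxx !andbF. Qed.
Lemma comm_p0 p : comm p p0.
Proof. by rewrite /comm /ac1 /= !andbF. Qed.

Lemma mcomm p q : comm p q -> pmx p *m pmx q = pmx q *m pmx p.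
Proof. by move=> h; rewrite pmx_comm h /sg /= scale1r. Qed.

Lemma manti p q : ~~ comm p q -> pmx p *m pmx q = - (pmx q *m pmx p).
Proof. by move=> h; rewrite pmx_comm h /sg /= scaleN1r. Qed.

Lemma mcomm_comm p q : pmx p *m pmx q = pmx q *m pmx p -> comm p q.
Proof.
move=> e; case: (boolP (comm p q)) => // nc.
have e2 : pmx q *m pmx p = 0.
  move: e; rewrite (manti nc) => /eqP; rewrite eq_sym -subr_eq0 opprK => /eqP.
  move=> h; apply/matrixP => i j; move/matrixP: h => /(_ i j); rewrite !mxE => /eqP.
  by rewrite -mulr2n mulrn_eq0 /= => /eqP.
have : (1%:M : 'M[algC]_4) = 0.
  have <- : pmx q *m (pmx q *m pmx p) *m pmx p = 1%:M.
    by rewrite mulmxA pmx_sq mul1mx pmx_sq.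
  by rewrite e2 mulmx0 mul0mx.
by move/matrixP => /(_ 0 0); rewrite !mxE /= => /eqP; rewrite oner_eq0.
Qed.

Lemma dj_eq t t' : [disjoint setof t & setof t'] = dj t t'.
Proof.
rewrite (eq_disjoint (in_setof t)) disjoint_has /dj; congr (~~ _).
by apply: eq_has => x; rewrite /= in_setof.
Qed.

Lemma line_max t : t \in lines -> maxclass (setof t).
Proof.
move=> ht; move: ch_line_ok => /allP/(_ t ht) /and5P [hu hn c12 c13 /andP [c23 _]].
split; first by rewrite cardsE; apply/card_uniqP.
split; first by move=> p; rewrite in_setof => hp; exact: (allP hn).
move=> p q; rewrite !in_setof /elems !inE => hp hq; apply: mcomm.
case/or3P: hp => /eqP ->; case/or3P: hq => /eqP ->;
  rewrite ?comm_refl // comm_sym //.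
Qed.

Lemma classify C : maxclass C -> exists2 t, t \in lines & C = setof t.
Proof.
case=> hc [hn hm].
have hu := enum_uniq (pred_of_set C).
have hmem := mem_enum (pred_of_set C).
move: hc; rewrite cardE.
case E: (enum (pred_of_set C)) hu => [|x [|y [|z [|w s]]]] //= hu _.
have inC v : v \in [:: x; y; z] -> v \in C by rewrite -E hmem.
have hx : x \in C by apply: inC; rewrite !inE eqxx.
have hy : y \in C by apply: inC; rewrite !inE eqxx ?orbT.
have hz : z \in C by apply: inC; rewrite !inE eqxx ?orbT.
have cm u v : u \in C -> v \in C -> comm u v.
  by move=> hu' hv'; apply: mcomm_comm; apply: hm.
have : has (fun t => same t (x, y, z)) lines.
move: ch_cls_ok => /allP/(_ x (allp_all x))/allP/(_ y (allp_all y))/allP/(_ z (allp_all z)).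
rewrite (hu : uniq [:: x; y; z]) /= (hn _ hx) (hn _ hy) (hn _ hz) (cm _ _ hx hy) (cm _ _ hx hz) (cm _ _ hy hz) /=; exact.
case/hasP => t ht /andP [s1 s2]; exists t => //.
apply/setP => v; rewrite in_setof -hmem E.
apply/idP/idP => hv; first exact: (allP s2).
exact: (allP s1).
Qed.



Lemma anti_ex t1 t5 : t1 \in lines -> t5 \in lines -> dj t1 t5 ->
  forall j k, j != k -> exists2 s, s \in elems t1 & comm s (eD t5 j) != comm s (eD t5 k).
Proof.
move=> h1 h5 hd j k jk.
move: ch_f1_ok => /allP/(_ t1 h1)/allP/(_ t5 h5); rewrite hd implyTb.
move=> /allP/(_ j (allo_all j))/allP/(_ k (allo_all k)); rewrite jk implyTb.
by case/hasP => s hs hc; exists s.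
Qed.

Lemma zero_gen (b : cv) s m : dotv b b = 1 -> (exists sig, pmx s *m b = sig *: b) ->
  ~~ comm s m -> dotv b (pmx m *m b) = 0.
Proof.
move=> hb [sig hs] nc.
apply: (orth_anti (pmx_herm s) (pmx_sq s) hb hs).
exact: manti.
Qed.

Lemma sg_inj a b : (sg a == sg b) = (a == b).
Proof.
case: a; case: b; rewrite /sg ?eqxx //=.
- by rewrite eq_sym -addr_eq0 -(natrD _ 1 1) pnatr_eq0.
- by rewrite -addr_eq0 -(natrD _ 1 1) pnatr_eq0.
Qed.

Lemma sgsplit (j k : 'I_4) : j != k -> ((2 <= j)%N != (2 <= k)%N) || (odd j != odd k).
Proof. by cas4 j; cas4 k. Qed.

Lemma cons5 (t1 t5 : tri) (b : cv) : t1 \in lines -> t5 \in lines -> dj t1 t5 ->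
  dotv b b = 1 -> (forall s, s \in elems t1 -> exists sig, pmx s *m b = sig *: b) ->
  exists B, eigbasis (setof t5) B.
Proof.
move=> h1 h5 hd hb heig.
move: ch_line_ok => /allP/(_ t5 h5) /and5P [_ _ c12 _ /andP [_ /eqP hr]].
set p := t5.1.1 in c12 hr *; set q := t5.1.2 in c12 hr *; set r := t5.2 in hr *.
set P := pmx p; set Q := pmx q; set R := pmx r.
have hPQ : P *m Q = Q *m P by apply: mcomm.
set c := c1 p.1 q.1 * c1 p.2 q.2.
have hc : c != 0 by rewrite mulf_neq0 ?c1_neq0.
have hPQR : P *m Q = c *: R by rewrite /P /Q pmx_mul /R hr.
have hR : R = c^-1 *: (P *m Q) by rewrite hPQR scalerA mulVf // scale1r.
have zk k : k != o0 -> dotv b (pmx (eD t5 k) *m b) = 0.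
  move=> k0; have := anti_ex h1 h5 hd; move=> /(_ o0 k); rewrite eq_sym k0.
  move=> /(_ isT) [s hs hcs].
  apply: (zero_gen hb (heig s hs)).
  by move: hcs; rewrite /= comm_p0.
have zP : dotv b (P *m b) = 0 by apply: (zk o1).
have zQ : dotv b (Q *m b) = 0 by apply: (zk o2).
have zR : dotv b (R *m b) = 0 by apply: (zk o3).
have zPQ : dotv b ((P *m Q) *m b) = 0 by rewrite hPQR -scalemxAl dotvZr zR mulr0.
have PP : P *m P = 1%:M by apply: pmx_sq.
have QQ : Q *m Q = 1%:M by apply: pmx_sq.
set w2 := Q *m b; set w3 := P *m b; set w4 := P *m (Q *m b).
have Pw2 : P *m w2 = w4 by [].
have Pw3 : P *m w3 = b by rewrite /w3 mulmxA PP mul1mx.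
have Pw4 : P *m w4 = w2 by rewrite /w4 mulmxA PP mul1mx.
have Qw2 : Q *m w2 = b by rewrite /w2 mulmxA QQ mul1mx.
have Qw3 : Q *m w3 = w4 by rewrite /w3 /w4 !mulmxA hPQ.
have Qw4 : Q *m w4 = w3 by rewrite /w4 /w3 mulmxA -hPQ -mulmxA (mulmxA Q) QQ mul1mx.
pose W (x y : bool) := b + sg y *: w2 + sg x *: w3 + (sg x * sg y) *: w4.
have PW x y : P *m W x y = sg x *: W x y.
  rewrite /W !mulmxDr -!scalemxAr Pw2 Pw3 Pw4.
  apply/colP => i; rewrite !mxE; case: x; case: y; rewrite /sg; ring.
have QW x y : Q *m W x y = sg y *: W x y.
  rewrite /W !mulmxDr -!scalemxAr Qw2 Qw3 Qw4.
  apply/colP => i; rewrite !mxE; case: x; case: y; rewrite /sg; ring.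
have RW x y : R *m W x y = (c^-1 * sg x * sg y) *: W x y.
  by rewrite hR -scalemxAl -mulmxA QW -scalemxAr PW !scalerA mulrAC.
have hPh : herm P by apply: pmx_herm.
have hQh : herm Q by apply: pmx_herm.
have d2 : dotv w2 b = 0 by rewrite /w2 dotv_herm.
have d3 : dotv w3 b = 0 by rewrite /w3 dotv_herm.
have d4 : dotv w4 b = 0.
  by rewrite /w4 dotv_herm // dotv_herm // mulmxA -hPQ.
have dWb x y : dotv (W x y) b = 1.
  by rewrite /W !dotvDl !dotvZl d2 d3 d4 hb; ring.
have dWW x y : dotv (W x y) (W x y) = 4%:R.
  rewrite {2}/W !dotvDr !dotvZr dWb.
  have -> : dotv (W x y) w2 = sg y by rewrite /w2 -dotv_herm // QW dotvZl dWb sg_conj mulr1.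
  have -> : dotv (W x y) w3 = sg x by rewrite /w3 -dotv_herm // PW dotvZl dWb sg_conj mulr1.
  have -> : dotv (W x y) w4 = sg x * sg y.
    by rewrite /w4 -dotv_herm // PW dotvZl -dotv_herm // QW dotvZl dWb !sg_conj mulr1.
  by case: x; case: y; rewrite /sg; ring.
pose V (j : 'I_4) := 2^-1 *: W (2 <= j)%N (odd j).
pose B : 'M[algC]_4 := \matrix_(i, j) V j i 0.
have colB j : col j B = V j by apply/colP => i; rewrite !mxE.
have PV j : P *m V j = sg (2 <= j)%N *: V j by rewrite -scalemxAr PW !scalerA mulrC.
have QV j : Q *m V j = sg (odd j) *: V j by rewrite -scalemxAr QW !scalerA mulrC.
have RV j : R *m V j = (c^-1 * sg (2 <= j)%N * sg (odd j)) *: V j.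
  by rewrite -scalemxAr RW !scalerA mulrC.
exists B; split.
  move=> i j; rewrite !colB; case: (eqVneq i j) => [<-|ij].
    rewrite /V dotvZl dotvZr dWW fmorphV /=.
    have -> : (2 : algC)^* = 2 by apply: conjC_nat.
    by rewrite mulrA -invfM -natrM mulVf // pnatr_eq0.
  case/orP: (sgsplit ij) => hne.
    apply: (orth_eig hPh (PV i) (PV j)); first exact: sg_conj.
    by rewrite sg_inj.
  apply: (orth_eig hQh (QV i) (QV j)); first exact: sg_conj.
  by rewrite sg_inj.
move=> x; rewrite in_setof /elems !inE => hx j; rewrite colB.
case/or3P: hx => /eqP ->.
- by exists (sg (2 <= j)%N).
- by exists (sg (odd j)).
- by exists (c^-1 * sg (2 <= j)%N * sg (odd j)).
Qed.



Lemma sqrt4 : (sqrtC 4%:R : algC)^-1 = 2^-1.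
Proof.
have -> : (4%:R : algC) = 2 ^+ 2 by rewrite expr2 -natrM.
by rewrite sqrCK // ler0n.
Qed.

Lemma unb_pair ti t5 Bi B5 : ti \in lines -> t5 \in lines -> dj ti t5 ->
  eigbasis (setof ti) Bi -> eigbasis (setof t5) B5 -> unbiased Bi B5.
Proof.
move=> hi h5 hd [oi ei] [o5 e5] i j; rewrite sqrt4.
apply: (unb (M := fun k => pmx (eD t5 k))).
- by rewrite oi eqxx.
- by rewrite o5 eqxx.
- by move=> k; apply: pmx_herm.
- by move=> k; apply: pmx_sq.
- move=> k; case: (eqVneq k o0) => [->|k0].
    by exists 1; rewrite /= pmx0 mul1mx scale1r.
  apply: e5; rewrite in_setof /elems.
  by move: k0; cas4 k => _; rewrite /= !inE eqxx ?orbT.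
- move=> k l kl; have [s hs hc] := anti_ex hi h5 hd kl.
  have hs' : s \in setof ti by rewrite in_setof.
  have [sig hsig] := ei s hs' i.
  apply: (orth_anti (pmx_herm s) (pmx_sq s) _ hsig); first by rewrite oi eqxx.
  rewrite mulmxA pmx_comm -scalemxAl -mulmxA pmx_comm -scalemxAr mulmxA scalerA sgM.
  have -> : (~~ comm s (eD t5 k) != ~~ comm s (eD t5 l)) = true by move: hc; case: (comm s (eD t5 k)); case: (comm s (eD t5 l)).
  by rewrite /sg scaleN1r.
Qed.

Lemma ifT_v (P : bool) : (if true then P else true) -> P.
Proof. by []. Qed.

Theorem theorem2 (C1 C2 : {set pauli}) :
  maxclass C1 -> maxclass C2 -> C1 != C2 ->
  (exists S, complete_set S /\ C1 \in S /\ C2 \in S) ->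
  ~ (exists (C3 C4 : {set pauli}) (B1 B2 B3 B4 : 'M[algC]_4),
        [/\ maxclass C3, maxclass C4,
            [&& [disjoint C1 & C2], [disjoint C1 & C3], [disjoint C1 & C4],
                [disjoint C2 & C3], [disjoint C2 & C4] & [disjoint C3 & C4]],
            [/\ eigbasis C1 B1, eigbasis C2 B2, eigbasis C3 B3 & eigbasis C4 B4]
          & weakly_unextendible [:: B1; B2; B3; B4]]).
Proof.
move=> hC1 hC2 _ _ [C3 [C4 [B1 [B2 [B3 [B4 [hC3 hC4 hdis [e1 e2 e3 e4] [_ hWU]]]]]]]].
have [t1 h1 E1] := classify hC1; have [t2 h2 E2] := classify hC2.
have [t3 h3 E3] := classify hC3; have [t4 h4 E4] := classify hC4.
rewrite E1 E2 E3 E4 !dj_eq in hdis; rewrite E1 in e1; rewrite E2 in e2.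
rewrite E3 in e3; rewrite E4 in e4.
case/and5P: hdis => d12 d13 d14 d23 /andP [d24 d34].
have : has (fun t5 => [&& dj t1 t5, dj t2 t5, dj t3 t5 & dj t4 t5]) lines.
  move: ch_f2_ok => /allP/(_ t1 h1)/allP/(_ t2 h2); rewrite d12 => /ifT_v /allP/(_ t3 h3); rewrite d13 d23 => /ifT_v /allP/(_ t4 h4); by rewrite d14 d24 d34.
case/hasP => t5 h5 /and4P [d15 d25 d35 d45].
case: (e1) => o1' ei1.
have [B5 e5] : exists B, eigbasis (setof t5) B.
  apply: (cons5 (b := col 0 B1) h1 h5 d15); first by rewrite o1' eqxx.
  by move=> s hs; apply: ei1; rewrite in_setof.
apply: hWU; exists (setof t5), B5; split; first exact: line_max.
split=> // B0; rewrite !inE => /or4P [] /eqP ->.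
- exact: (unb_pair h1 h5 d15).
- exact: (unb_pair h2 h5 d25).
- exact: (unb_pair h3 h5 d35).
- exact: (unb_pair h4 h5 d45).
Qed.
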